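(* Let $\Bbbk$ be a field of characteristic $\neq 2$ and let $A_1,\dots,A_m\in\Bbbk^{n\times n}$ be symmetric matrices. There exists $P\in\mathrm{GL}_n(\Bbbk)$ such that $P^TA_iP$ is diagonal for every $1\le i\le m$ if and only if $Z(A_1,\dots,A_m)$ contains $n$ nonzero matrices $\epsilon_1,\dots,\epsilon_n$ with $\epsilon_j^2=\epsilon_j$, $\epsilon_j\epsilon_l=0$ for $j\ne l$, and $\epsilon_1+\cdots+\epsilon_n=I_n$.
   Context: The center of symmetric matrices $A_1,\dots,A_m\in\Bbbk^{n\times n}$ is $Z(A_1,\dots,A_m)=\{X\in\Bbbk^{n\times n} : (A_iX)^T=A_iX \text{ for all } 1\le i\le m\}$. *)

(* Defs.v *)
From HB Require Import structures.
From mathcomp Require Import all_boot all_order all_algebra.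
Set Implicit Arguments. Unset Strict Implicit. Unset Printing Implicit Defensive.
Import GRing.Theory.
Local Open Scope ring_scope.

Definition center (F : fieldType) (m n : nat) (A : 'I_m -> 'M[F]_n) : pred 'M[F]_n :=
  fun X => [forall i, ((A i *m X)^T == A i *m X)].

(* Main.v *)
Require Import Defs.
From HB Require Import structures.
From mathcomp Require Import all_boot all_order all_algebra.
Import GRing.Theory.
Local Open Scope ring_scope.

Lemma entry_delta (F : fieldType) n (X : 'M[F]_n) j l :
  X j l = (delta_mx 0 j *m X *m delta_mx l 0 : 'M_1) 0 0.
Proof. by rewrite -rowE -colE !mxE. Qed.

Lemma diag_eq (F : fieldType) n (D : 'M[F]_n) :
  is_diag_mx D -> D = diag_mx (\row_k D k k).
Proof.
move/is_diag_mxP=> H; apply/matrixP=> i j; rewrite !mxE.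
case: (eqVneq i j) => [->|ne]; first by rewrite mulr1n.
by rewrite mulr0n H.
Qed.

Lemma center_eq (F : fieldType) m n (A : 'I_m -> 'M[F]_n) X i :
  X \in center A -> (A i *m X)^T = A i *m X.
Proof. by rewrite unfold_in /center => /forallP /(_ i) /eqP. Qed.

Theorem mainTheorem3 (F : fieldType) (m n : nat) (A : 'I_m -> 'M[F]_n)
  (hchar : (2%:R : F) != 0)
  (hsym : forall i, (A i)^T = A i) :
  (exists P : 'M[F]_n, P \in unitmx /\ forall i, is_diag_mx (P^T *m A i *m P)) <->
  (exists eps : 'I_n -> 'M[F]_n,
     [/\ forall j, eps j \in center A,
         forall j, eps j != 0,
         forall j, eps j *m eps j = eps j,
         forall j l, j != l -> eps j *m eps l = 0
       & \sum_(j < n) eps j = 1%:M]).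
Proof.
split.
- case=> P [uP hD].
  pose E (j : 'I_n) : 'M[F]_n := delta_mx j j.
  exists (fun j => P *m E j *m invmx P); split.
  + move=> j; rewrite unfold_in /center; apply/forallP=> i; apply/eqP.
    set D := P^T *m A i *m P.
    have hA : A i = (invmx P)^T *m D *m invmx P.
      rewrite /D !mulmxA -trmx_mul mulmxV // trmx1 mul1mx.
      by rewrite -mulmxA mulmxV // mulmx1.
    have hDd : D = diag_mx (\row_k D k k) by apply: diag_eq; exact: hD.
    move: hA; rewrite hDd; move: (\row_k D k k) => d ->.
    rewrite !mulmxA -!(mulmxA _ (invmx P) P) mulVmx // mulmx1.
    rewrite !trmx_mul trmxK tr_diag_mx /E trmx_delta.
    rewrite !mulmxA; congr (_ *m _).
    rewrite -!mulmxA; congr (_ *m _).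
    rewrite mul_diag_mx mul_mx_diag; apply/matrixP=> a b; rewrite !mxE.
    by case: eqP => [->|]; case: eqP => [->|] /=; rewrite ?mulr0 ?mul0r ?mulr1 ?mul1r.
  + move=> j; apply/negP=> /eqP h.
    have : E j = invmx P *m (P *m E j *m invmx P) *m P.
      by rewrite !mulmxA mulVmx // mul1mx -mulmxA mulVmx // mulmx1.
    rewrite h mulmx0 mul0mx => /matrixP /(_ j j); rewrite !mxE !eqxx /=.
    by move/eqP; rewrite oner_eq0.
  + move=> j; rewrite !mulmxA -(mulmxA _ (invmx P) P) mulVmx // mulmx1.
    by rewrite /E -(mulmxA P) mul_delta_mx.
  + move=> j l jl; rewrite !mulmxA -(mulmxA _ (invmx P) P) mulVmx // mulmx1.
    by rewrite /E -(mulmxA P) mul_delta_mx_0 // mulmx0 mul0mx.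
  + rewrite -mulmx_suml -mulmx_sumr.
    have -> : \sum_(j < n) E j = 1%:M.
      apply/matrixP=> a b; rewrite summxE !mxE (bigD1 a) //= !mxE eqxx /=.
      rewrite big1 ?addr0; first by rewrite eq_sym.
      by move=> k /negPf ka; rewrite !mxE eq_sym ka.
    by rewrite mulmx1 mulmxV.
- case=> eps [hc hnz hid hort hsum].
  have hk : forall j, exists k, col k (eps j) != 0.
    move=> j; apply/existsP; apply: contraR (hnz j) => /existsPn h.
    apply/eqP/matrixP=> a b; move: (h b); rewrite negbK => /eqP/matrixP/(_ a 0).
    by rewrite !mxE.
  pose k j := xchoose (hk j).
  pose v j := col (k j) (eps j).
  have hvnz : forall j, v j != 0 by move=> j; exact: (xchooseP (hk j)).
  have hv : forall j, eps j *m v j = v j.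
    by move=> j; rewrite /v !colE mulmxA hid.
  have hvo : forall j l, j != l -> eps l *m v j = 0.
    by move=> j l jl; rewrite -hv mulmxA hort ?mul0mx // eq_sym.
  pose P : 'M[F]_n := \matrix_(a, j) v j a 0.
  have hcol : forall j, col j P = v j.
    by move=> j; apply/matrixP=> a b; rewrite !mxE.
  exists P; split.
  + rewrite -unitmx_tr -row_free_unit -kermx_eq0; apply/eqP/row_matrixP=> a.
    rewrite row0; set x := row a (kermx P^T).
    have hx : x *m P^T = 0 by rewrite /x -row_mul mulmx_ker row0.
    apply/rowP=> l.
    have : (x *m P^T) *m (eps l)^T = 0 by rewrite hx mul0mx.
    rewrite (mulmx_sum_row x) mulmx_suml (bigD1 l) //= big1 ?addr0.
      rewrite -scalemxAl -tr_col hcol -trmx_mul hv => /eqP.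
      by rewrite scaler_eq0 trmx_eq0 (negPf (hvnz l)) orbF => /eqP ->; rewrite mxE.
    move=> j jl; rewrite -scalemxAl -tr_col hcol -trmx_mul hvo ?trmx0 ?scaler0 //.
  + move=> i; apply/is_diag_mxP=> j l jl.
    have jl' : j != l by apply: contra jl => /eqP->.
    rewrite entry_delta !mulmxA -rowE -!mulmxA -colE -tr_col hcol hcol.
    rewrite -[v l]hv (mulmxA (A i)).
    rewrite -((@center_eq F m n A (eps l) i (hc l))) trmx_mul !mulmxA -trmx_mul hvo // trmx0 !mul0mx.
    by rewrite mxE.
Qed.
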